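(* Let $0<\alpha<1$ and $\sigma=1-\alpha/2$. For every integer $s\ge1$, $$\frac12<\varkappa_s<\frac{1}{2-\alpha},\qquad\text{where}\quad \varkappa_s=\frac{(s+\sigma)^{2-\alpha}-(s-1+\sigma)^{2-\alpha}-(2-\alpha)(s-1+\sigma)^{1-\alpha}}{(2-\alpha)\big((s+\sigma)^{1-\alpha}-(s-1+\sigma)^{1-\alpha}\big)}.$$ *)

(* Defs.v *)
From Stdlib Require Import Reals.
Open Scope R_scope.

Definition sigma (alpha : R) : R := 1 - alpha / 2.

Definition kappa (alpha : R) (s : nat) : R :=
  let a := INR s + sigma alpha in
  let b := INR s - 1 + sigma alpha in
  (Rpower a (2 - alpha) - Rpower b (2 - alpha)
     - (2 - alpha) * Rpower b (1 - alpha))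
  / ((2 - alpha) * (Rpower a (1 - alpha) - Rpower b (1 - alpha))).

(* Main.v *)
Require Import Defs.
From Stdlib Require Import Reals Lra.
Open Scope R_scope.

Lemma Rpow_pos x y : 0 < Rpower x y.
Proof. unfold Rpower; apply exp_pos. Qed.

Lemma Rpow_1l y : Rpower 1 y = 1.
Proof. unfold Rpower; rewrite ln_1, Rmult_0_r; apply exp_0. Qed.

Lemma Rpow_m1 x y : 0 < x -> Rpower x y = Rpower x (y-1) * x.
Proof. intros. rewrite <- (Rpower_1 x) at 3 by lra. rewrite <- Rpower_plus. f_equal; ring. Qed.

Lemma dl_eq f x l l' : derivable_pt_lim f x l -> l = l' -> derivable_pt_lim f x l'.
Proof. intros H ->; exact H. Qed.

Lemma bern t be : 0 < be < 1 -> 0 < t -> t <> 1 -> Rpower t be < 1 + be * (t - 1).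
Proof.
  intros Hb Ht Ht1.
  set (g := fun x => 1 + be * (x - 1) - Rpower x be).
  set (g' := fun x => be - be * Rpower x (be - 1)).
  assert (D : forall c, 0 < c -> derivable_pt_lim g c (g' c)).
  { intros c Hc. unfold g, g'.
    apply dl_eq with (0 + be * (1 - 0) - be * Rpower c (be - 1)); [|ring].
    apply derivable_pt_lim_minus; [|apply derivable_pt_lim_power; lra].
    apply derivable_pt_lim_plus; [apply derivable_pt_lim_const|].
    apply derivable_pt_lim_scal. apply derivable_pt_lim_minus;
      [apply derivable_pt_lim_id|apply derivable_pt_lim_const]. }
  assert (g1 : g 1 = 0) by (unfold g; rewrite Rpow_1l; ring).
  destruct (Rlt_or_le 1 t) as [H|H].
  - destruct (MVT_cor2 g g' 1 t H) as [c [E Hc]].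
    { intros c Hc; apply D; lra. }
    assert (Rpower c (be - 1) < 1).
    { assert (Rpower c (be - 1) < Rpower c 0) by (apply Rpower_lt; lra). rewrite Rpower_O in H0 by lra. exact H0. }
    assert (0 < g' c * (t - 1)).
    { unfold g'. apply Rmult_lt_0_compat; [|lra]. assert (0 < be * (1 - Rpower c (be - 1))) by (apply Rmult_lt_0_compat; lra). lra. }
    assert (0 < g t) by lra; unfold g in *; lra.
  - assert (H' : t < 1) by (destruct H; [auto| congruence]).
    destruct (MVT_cor2 g g' t 1 H') as [c [E Hc]].
    { intros c Hc; apply D; lra. }
    assert (Rpower c (1 - be) < 1).
    { assert (Rpower c (1 - be) < Rpower 1 (1 - be)) by (apply Rlt_Rpower_l; lra). rewrite Rpow_1l in H0. exact H0. }
    assert (1 < Rpower c (be - 1)).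
    { replace (be - 1) with (- (1 - be)) by ring. rewrite Rpower_Ropp.
      pose proof (Rpow_pos c (1 - be)).
      apply (Rmult_lt_reg_r (Rpower c (1 - be))); auto.
      rewrite Rinv_l by lra. lra. }
    assert (g' c * (1 - t) < 0).
    { unfold g'. assert (0 < be * (Rpower c (be - 1) - 1)) by (apply Rmult_lt_0_compat; lra). assert (0 < (be * Rpower c (be - 1) - be) * (1 - t)) by (apply Rmult_lt_0_compat; lra). lra. }
    assert (0 < g t) by lra; unfold g in *; lra.
Qed.

Lemma upper b be : 0 < b -> 0 < be < 1 ->
  Rpower (b+1) (1+be) - Rpower b (1+be) - (1+be) * Rpower b be
  < Rpower (b+1) be - Rpower b be.
Proof.
  intros Hb Hbe.
  assert (Ea : Rpower (b+1) (1+be) = Rpower (b+1) be * (b+1)).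
  { rewrite (Rpow_m1 (b+1) (1+be)) by lra. f_equal. f_equal. ring. }
  assert (Eb : Rpower b (1+be) = Rpower b be * b).
  { rewrite (Rpow_m1 b (1+be)) by lra. f_equal. f_equal. ring. }
  assert (Ep : Rpower (b+1) be = Rpower ((b+1)/b) be * Rpower b be).
  { rewrite Rpower_mult_distr. f_equal. field. lra.
    apply Rdiv_lt_0_compat; lra. lra. }
  pose proof (bern ((b+1)/b) be Hbe) as Hp.
  assert (Hp' : Rpower ((b+1)/b) be < 1 + be / b).
  { replace (1 + be / b) with (1 + be * ((b+1)/b - 1)) by (field; lra).
    apply Hp. apply Rdiv_lt_0_compat; lra.
    intro E. assert (HH : b+1 = (b+1)/b * b) by (field; lra). rewrite E in HH. lra. }
  pose proof (Rpow_pos b be) as HB.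
  rewrite Ea, Eb, Ep.
  set (p := Rpower ((b+1)/b) be) in *. set (B := Rpower b be) in *.
  assert (b * p < b + be).
  { apply (Rmult_lt_compat_l b) in Hp'; auto.
    replace (b * (1 + be / b)) with (b + be) in Hp' by (field; lra). lra. }
  assert (b * p * B < (b + be) * B) by (apply Rmult_lt_compat_r; lra).
  nra.
Qed.

Lemma lower b be : 0 < b -> 0 < be < 1 ->
  (1+be) * (Rpower (b+1) be + Rpower b be)
  < 2 * (Rpower (b+1) (1+be) - Rpower b (1+be)).
Proof.
  intros Hb Hbe.
  set (B := Rpower b be).
  set (h := fun x => 2 * (Rpower x (1+be) - Rpower b (1+be)) - (1+be) * ((x - b) * (Rpower x be + B))).
  set (h' := fun x => 2 * ((1+be) * Rpower x be) - (1+be) * ((1 - 0) * (Rpower x be + B) + (x - b) * (be * Rpower x (be - 1) + 0))).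
  destruct (MVT_cor2 h h' b (b+1)) as [c [E Hc]]; [lra| |].
  { intros c Hc. unfold h, h'.
    apply (derivable_pt_lim_minus (fun x => 2 * (Rpower x (1+be) - Rpower b (1+be)))
             (fun x => (1+be) * ((x - b) * (Rpower x be + B)))).
    - apply (derivable_pt_lim_scal (fun x => Rpower x (1+be) - Rpower b (1+be))).
      apply dl_eq with ((1+be) * Rpower c (1 + be - 1) - 0).
      apply (derivable_pt_lim_minus (fun x => Rpower x (1+be)) (fun _ => Rpower b (1+be))).
      apply derivable_pt_lim_power; lra. apply derivable_pt_lim_const.
      replace (1 + be - 1) with be by ring. ring.
    - apply dl_eq with ((1+be) * ((1 - 0) * (Rpower c be + B) + (c - b) * (be * Rpower c (be - 1) + 0))); [|ring].
      apply (derivable_pt_lim_scal (fun x => (x - b) * (Rpower x be + B))).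
      apply (derivable_pt_lim_mult (fun x => x - b) (fun x => Rpower x be + B)).
      + apply (derivable_pt_lim_minus (fun x => x) (fun _ => b)); [apply derivable_pt_lim_id|apply derivable_pt_lim_const].
      + apply (derivable_pt_lim_plus (fun x => Rpower x be) (fun _ => B)); [apply derivable_pt_lim_power; lra|apply derivable_pt_lim_const]. }
  assert (hb : h b = 0) by (unfold h; ring).
  set (Q := Rpower c (be - 1)).
  assert (HX : Rpower c be = Q * c) by (apply Rpow_m1; lra).
  assert (HB : B = Rpower (b/c) be * (Q * c)).
  { rewrite <- HX. unfold B. rewrite Rpower_mult_distr. f_equal. field. lra.
    apply Rdiv_lt_0_compat; lra. lra. }
  pose proof (bern (b/c) be Hbe) as Hp.
  assert (Hp' : Rpower (b/c) be < 1 + be * (b/c - 1)).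
  { apply Hp. apply Rdiv_lt_0_compat; lra.
    intro E1. assert (HH : b = b/c * c) by (field; lra). rewrite E1 in HH. lra. }
  pose proof (Rpow_pos c (be-1)) as HQ. fold Q in HQ.
  assert (HQc : 0 < Q * c) by (apply Rmult_lt_0_compat; lra).
  assert (B < (1 + be * (b/c - 1)) * (Q * c)).
  { rewrite HB. apply Rmult_lt_compat_r; lra. }
  replace ((1 + be * (b/c - 1)) * (Q * c)) with (Q * c + be * (b - c) * Q) in H by (field; lra).
  assert (0 < h' c).
  { unfold h'. fold Q. rewrite HX.
    assert (0 < (1+be) * (Q * c - B - be * (c - b) * Q)) by (apply Rmult_lt_0_compat; lra).
    nra. }
  assert (0 < h (b+1)).
  { assert (0 < h' c * (b + 1 - b)) by (apply Rmult_lt_0_compat; lra). lra. }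
  unfold h in H1. replace (b + 1 - b) with 1 in H1 by ring. lra.
Qed.

Lemma lt_div_r x N D : 0 < D -> x * D < N -> x < N / D.
Proof. intros HD H. apply (Rmult_lt_reg_r D); auto. unfold Rdiv. rewrite Rmult_assoc, Rinv_l by lra. lra. Qed.
Lemma div_lt_r x N D : 0 < D -> N < x * D -> N / D < x.
Proof. intros HD H. apply (Rmult_lt_reg_r D); auto. unfold Rdiv. rewrite Rmult_assoc, Rinv_l by lra. lra. Qed.

Theorem lemma3 (alpha : R) (s : nat) :
  0 < alpha -> alpha < 1 -> (1 <= s)%nat ->
  1 / 2 < kappa alpha s /\ kappa alpha s < 1 / (2 - alpha).
Proof.
  intros H0 H1 Hs.
  apply le_INR in Hs. simpl in Hs.
  unfold kappa; cbv zeta; unfold Defs.sigma.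
  set (b := INR s - 1 + (1 - alpha / 2)).
  set (be := 1 - alpha).
  assert (Hb : 0 < b) by (unfold b; lra).
  assert (Hbe : 0 < be < 1) by (unfold be; lra).
  replace (INR s + (1 - alpha / 2)) with (b + 1) by (unfold b; ring).
  replace (2 - alpha) with (1 + be) by (unfold be; ring).
  pose proof (upper b be Hb Hbe). pose proof (lower b be Hb Hbe).
  assert (Rpower b be < Rpower (b+1) be) by (apply Rlt_Rpower_l; lra).
  set (N := Rpower (b + 1) (1 + be) - Rpower b (1 + be) - (1 + be) * Rpower b be) in *.
  assert (HD : 0 < (1 + be) * (Rpower (b + 1) be - Rpower b be)) by (apply Rmult_lt_0_compat; lra).
  split.
  - apply lt_div_r; auto. unfold N in *. lra.
  - apply div_lt_r; auto. replace (1 / (1 + be) * ((1 + be) * (Rpower (b + 1) be - Rpower b be))) with (Rpower (b + 1) be - Rpower b be) by (field; lra).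
    lra.
Qed.
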